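(* Let $K$ be an algebraically closed field complete with respect to a nontrivial non-Archimedean valuation $\nu:K\to\mathbb{T}=\mathbb{R}\cup\{-\infty\}$, and let $X$ be a closed algebraic subset of $\mathbb{A}^n=K^n$. Let $\mathcal{G}$ be the set of all linear embeddings of $X$, and let \[\pi=\varprojlim_{i\in\mathcal{G}}\pi_i : X^{an}\longrightarrow \varprojlim_{i\in\mathcal{G}} \mathrm{Trop}_i(X).\] Then (i) $\pi$ is surjective, and (ii) the restriction of $\pi$ to $X^{cl}$ is injective.
   Context: Conventions: $\nu(0)=-\infty$; $\mathbb{T}$ carries the topology extending that of $\mathbb{R}$ in which the neighbourhoods of $-\infty$ are the semi-infinite open intervals; $\nu:\mathbb{A}^N\to\mathbb{T}^N$ also denotes coordinatewise valuation. $z_1,\dots,z_n$ are the coordinates on $\mathbb{A}^n$ and $K[X]$ is the coordinate ring of $X$. $X^{an}$ (the Berkovich analytification) is the set of multiplicative seminorms $[\ ]_x$ on $K[X]$ compatible with $\nu$, i.e. $[a]_x=\exp(\nu(a))$ for $a\in K$, with the weakest topology making all maps $x\mapsto[f]_x$ continuous. $X^{cl}\subset X^{an}$ is the set of seminorms $[f]_x=\exp(\nu(f(x)))$ coming from closed points $x\in X$. A morphism $i:X\to\mathbb{A}^N$, $i(x)=(f_1(x),\dots,f_N(x))$, is linear if each $f_j$ is a $K$-linear combination of $z_1,\dots,z_n$ and $1$; a linear embedding is a linear morphism that is an isomorphism onto its image. For such $i$, $\mathrm{Trop}_i(X)=\nu(i(X))\subset\mathbb{T}^N$ is the linear tropicalization,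 and $\pi_i:X^{an}\to\mathbb{T}^N$ is $x\mapsto(\log[f_1]_x,\dots,\log[f_N]_x)$. $\mathcal{G}$ is partially ordered by: $i:X\to\mathbb{A}^N$ dominates $j:X\to\mathbb{A}^M$ if there is a morphism $\varphi:\mathbb{A}^N\to\mathbb{A}^M$ restricting to a homomorphism of tori $(K^* )^N\to(K^* )^M$, which is a composition of a linear embedding and a coordinate projection, with $\varphi\circ i=j$; such $\varphi$ induces a map $\mathrm{Trop}_i(X)\to\mathrm{Trop}_j(X)$, and the inverse limit is taken in topological spaces over this directed system. *)

(* Defs.v *)
From mathcomp Require Import all_boot all_order all_algebra.
From mathcomp Require Import mpoly.
From mathcomp Require Import all_classical all_reals all_analysis.
Set Implicit Arguments. Unset Strict Implicit. Unset Printing Implicit Defensive.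
Import Order.TTheory GRing.Theory Num.Theory.
Local Open Scope ring_scope.
Local Open Scope classical_set_scope.

(* T = R ∪ {-oo} is represented inside \bar R (values +oo are excluded by the
   valuation axioms below). *)

Definition expT (R : realType) (t : \bar R) : R :=
  match t with EFin r => expR r | -oo%E => 0 | +oo%E => 0 end.

Definition logT (R : realType) (r : R) : \bar R :=
  if r == 0 then -oo%E else (ln r)%:E.

(** nu : K -> T is a non-Archimedean valuation in the (log-absolute value)
    convention of the paper: [a] = exp(nu a), nu 0 = -oo. *)
Definition is_nA_valuation (R : realType) (K : fieldType) (nu : K -> \bar R) :=
  [/\ forall a, nu a = -oo%E <-> a = 0,
      forall a, nu a != +oo%E,
      forall a b : K, nu (a * b)%R = (nu a + nu b)%E &
      forall a b : K, (nu (a + b)%R <= Order.max (nu a) (nu b))%E].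

Definition nontrivial_valuation (R : realType) (K : fieldType) (nu : K -> \bar R) :=
  exists a : K, nu a != 0%E /\ nu a != -oo%E.

(** Completeness: every Cauchy sequence (for the metric exp(nu(a-b)))
    converges. *)
Definition complete_valuation (R : realType) (K : fieldType) (nu : K -> \bar R) :=
  forall u : nat -> K,
    (forall M : R, exists N : nat, forall m k, (N <= m)%N -> (N <= k)%N ->
        (nu (u m - u k)%R < M%:E)%E) ->
    exists l : K, forall M : R, exists N : nat, forall m, (N <= m)%N ->
        (nu (u m - l)%R < M%:E)%E.

Definition closed_algebraic (K : fieldType) (n : nat) (X : set ('I_n -> K)) :=
  exists S : set (mpoly.mpoly n K),
    X = [set p | forall f, S f -> mpoly.meval p f = 0].

Definition coordz (K : fieldType) (n : nat) (k : 'I_n) : mpoly.mpoly n K :=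
  mpoly.mpolyX K (mpoly.mnm1 k).

Definition linpoly (K : fieldType) (n N : nat) (A : 'I_N -> 'I_n -> K)
  (b : 'I_N -> K) (j : 'I_N) : mpoly.mpoly n K :=
  \sum_(k < n) mpoly.mpolyC n (A j k) * coordz K k + mpoly.mpolyC n (b j).

Definition linmap (K : fieldType) (n N : nat) (A : 'I_N -> 'I_n -> K)
  (b : 'I_N -> K) (p : 'I_n -> K) : 'I_N -> K :=
  fun j => \sum_(k < n) A j k * p k + b j.

(** i is a linear embedding of X: it is an isomorphism onto its (closed)
    image, i.e. the pull-back K[y_1..y_N] -> K[X] is surjective: every
    coordinate z_k restricted to X is a polynomial in f_1,...,f_N. *)
Definition lin_embedding (K : fieldType) (n : nat) (X : set ('I_n -> K))
  (N : nat) (A : 'I_N -> 'I_n -> K) (b : 'I_N -> K) :=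
  forall k : 'I_n, exists g : mpoly.mpoly N K,
    forall p, X p -> mpoly.meval (linmap A b p) g = p k.

(** A morphism phi : A^N -> A^M which is a composition of a linear
    embedding and a coordinate projection is exactly an affine map
    phi(y)_l = sum_k C l k y_k + d l; it restricts to a homomorphism of
    tori (K^x)^N -> (K^x)^M. *)
Definition torus_hom (K : fieldType) (N M : nat) (C : 'I_M -> 'I_N -> K)
  (d : 'I_M -> K) :=
  forall y y' : 'I_N -> K, (forall k, y k != 0) -> (forall k, y' k != 0) ->
    (forall l, linmap C d y l != 0) /\
    linmap C d (fun k => y k * y' k) = (fun l => linmap C d y l * linmap C d y' l).

(** X^an: multiplicative seminorms on K[X] compatible with nu.  A seminorm on
    K[X] = K[z]/I(X) is represented as a seminorm on K[z] vanishing on I(X). *)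
Definition berkovich_point (R : realType) (K : fieldType) (nu : K -> \bar R)
  (n : nat) (X : set ('I_n -> K)) (x : mpoly.mpoly n K -> R) :=
  [/\ forall a : K, x (mpoly.mpolyC n a) = expT (nu a),
      forall f, 0 <= x f,
      forall f g, x (f * g) = x f * x g,
      forall f g, x (f + g) <= x f + x g &
      forall f, (forall p, X p -> mpoly.meval p f = 0) -> x f = 0].

Definition classical_point (R : realType) (K : fieldType) (nu : K -> \bar R)
  (n : nat) (p : 'I_n -> K) : mpoly.mpoly n K -> R :=
  fun f => expT (nu (mpoly.meval p f)).

Definition pi_lin (R : realType) (K : fieldType) (n N : nat)
  (A : 'I_N -> 'I_n -> K) (b : 'I_N -> K) (x : mpoly.mpoly n K -> R) :
  'I_N -> \bar R := fun j => logT (x (linpoly A b j)).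

Definition nuvec (R : realType) (K : fieldType) (nu : K -> \bar R) (N : nat)
  (y : 'I_N -> K) : 'I_N -> \bar R := fun j => nu (y j).

Definition trop_lin (R : realType) (K : fieldType) (nu : K -> \bar R) (n : nat)
  (X : set ('I_n -> K)) (N : nat) (A : 'I_N -> 'I_n -> K) (b : 'I_N -> K) :
  set ('I_N -> \bar R) := [set nuvec nu (linmap A b p) | p in X].

(** A family indexed by linear data; only its values at linear embeddings
    matter. *)
Definition trop_family (R : realType) (K : fieldType) (n : nat) :=
  forall N : nat, ('I_N -> 'I_n -> K) -> ('I_N -> K) -> ('I_N -> \bar R).

(** Elements of the inverse limit of Trop_i(X) over the directed set G of
    linear embeddings: t_i in Trop_i(X) for every i in G, and whenever i
    dominates j via phi, t_j is the image of t_i under the map induced by phi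
    (the map nu(y) |-> nu(phi(y)), well defined since phi is a torus
    homomorphism). *)
Definition in_inverse_limit (R : realType) (K : fieldType) (nu : K -> \bar R)
  (n : nat) (X : set ('I_n -> K)) (t : trop_family R K n) :=
  (forall N A b, lin_embedding X A b -> trop_lin nu X A b (t N A b)) /\
  (forall N M (A : 'I_N -> 'I_n -> K) b (A' : 'I_M -> 'I_n -> K) b'
          (C : 'I_M -> 'I_N -> K) d,
     lin_embedding X A b -> lin_embedding X A' b' -> torus_hom C d ->
     (forall p, X p -> linmap C d (linmap A b p) = linmap A' b' p) ->
     exists y : 'I_N -> K,
       nuvec nu y = t N A b /\ nuvec nu (linmap C d y) = t M A' b').

(* Main.v *)
Require Import Defs.
From mathcomp Require Import all_boot all_order all_algebra.
From mathcomp Require Import all_classical all_reals all_analysis.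
From mathcomp Require mpoly.
Set Implicit Arguments. Unset Strict Implicit. Unset Printing Implicit Defensive.
Import Order.TTheory GRing.Theory Num.Theory.
Import numFieldNormedType.Exports.
Local Open Scope ring_scope.
Local Open Scope classical_set_scope.
Canonical mpoly.mpoly_mpoly__canonical__eqtype_SubType.
Canonical mpoly.mpoly_mpoly__canonical__eqtype_Equality.
Canonical mpoly.mpoly_mpoly__canonical__eqtype_SubEquality.
Canonical mpoly.mpoly_mpoly__canonical__choice_Choice.
Canonical mpoly.mpoly_mpoly__canonical__choice_SubChoice.
Canonical mpoly.mpoly_mpoly__canonical__Algebra_BaseAddMagma.
Canonical mpoly.mpoly_mpoly__canonical__Algebra_ChoiceBaseAddMagma.
Canonical mpoly.mpoly_mpoly__canonical__Algebra_AddMagma.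
Canonical mpoly.mpoly_mpoly__canonical__Algebra_AddSemigroup.
Canonical mpoly.mpoly_mpoly__canonical__Algebra_BaseAddUMagma.
Canonical mpoly.mpoly_mpoly__canonical__Algebra_ChoiceBaseAddUMagma.
Canonical mpoly.mpoly_mpoly__canonical__Algebra_BaseZmodule.
Canonical mpoly.mpoly_mpoly__canonical__Algebra_AddUMagma.
Canonical mpoly.mpoly_mpoly__canonical__Algebra_Nmodule.
Canonical mpoly.mpoly_mpoly__canonical__Algebra_Zmodule.
Canonical mpoly.mpoly_mpoly__canonical__GRing_LSemiModule.
Canonical mpoly.mpoly_mpoly__canonical__GRing_Lmodule.
Canonical mpoly.mpoly_mpolyC__canonical__Algebra_Additive.
Canonical mpoly.mpoly_mpoly__canonical__GRing_PzSemiRing.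
Canonical mpoly.mpoly_mpoly__canonical__GRing_PzRing.
Canonical mpoly.mpoly_mpoly__canonical__GRing_NzSemiRing.
Canonical mpoly.mpoly_mpoly__canonical__GRing_NzRing.
Canonical mpoly.mpoly_mpolyC__canonical__GRing_RMorphism.
Canonical mpoly.mpoly_mpoly__canonical__GRing_LSemiAlgebra.
Canonical mpoly.mpoly_mpoly__canonical__GRing_Lalgebra.
Canonical mpoly.mpoly_mmap__canonical__Algebra_Additive.
Canonical mpoly.mpoly_mmap__canonical__GRing_RMorphism.
Canonical mpoly.mpoly_mpoly__canonical__GRing_ComPzSemiRing.
Canonical mpoly.mpoly_mpoly__canonical__GRing_ComPzRing.
Canonical mpoly.mpoly_mpoly__canonical__GRing_ComNzSemiRing.
Canonical mpoly.mpoly_mpoly__canonical__GRing_ComNzRing.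
Canonical mpoly.mpoly_mpoly__canonical__GRing_SemiAlgebra.
Canonical mpoly.mpoly_mpoly__canonical__GRing_ComSemiAlgebra.
Canonical mpoly.mpoly_mpoly__canonical__GRing_Algebra.
Canonical mpoly.mpoly_mpoly__canonical__GRing_ComAlgebra.
Canonical mpoly.mpoly_comp_mpoly__canonical__Algebra_Additive.
Canonical mpoly.mpoly_comp_mpoly__canonical__GRing_Linear.
Canonical mpoly.mpoly_comp_mpoly__canonical__GRing_RMorphism.
Canonical mpoly.mpoly_comp_mpoly__canonical__GRing_LRMorphism.
Canonical mpoly.mpoly_meval__canonical__Algebra_Additive.
Canonical mpoly.mpoly_meval__canonical__GRing_RMorphism.
Canonical mpoly.mpoly_meval__canonical__GRing_Linear.
Canonical mpoly.mpoly_meval__canonical__GRing_LRMorphism.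
Canonical mpoly.mpoly_mpolyOver_pred__canonical__Algebra_AddClosed.
Canonical mpoly.mpoly_mpolyOver_pred__canonical__Algebra_OppClosed.
Canonical mpoly.mpoly_mpolyOver_pred__canonical__Algebra_ZmodClosed.
Canonical mpoly.mpoly_mpolyOver_pred__canonical__GRing_Mul2Closed.
Canonical mpoly.mpoly_mpolyOver_pred__canonical__GRing_Semiring2Closed.
Canonical mpoly.mpoly_mpolyOver_pred__canonical__GRing_MulClosed.
Canonical mpoly.mpoly_mpolyOver_pred__canonical__GRing_SemiringClosed.
Canonical mpoly.mpoly_mpolyOver_pred__canonical__GRing_SmulClosed.
Canonical mpoly.mpoly_mpolyOver_pred__canonical__GRing_SubringClosed.
Canonical mpoly.mpoly_mpoly__canonical__GRing_UnitRing.
Canonical mpoly.mpoly_mpoly__canonical__GRing_UnitAlgebra.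
Canonical mpoly.mpoly_mpoly__canonical__GRing_ComUnitRing.
Canonical mpoly.mpoly_mpoly__canonical__GRing_ComUnitAlgebra.
Canonical mpoly.mpoly_mpoly__canonical__GRing_IntegralDomain.
Canonical mpoly.mpoly_mpoly_of_dhomog__canonical__Algebra_Additive.
Canonical mpoly.mpoly_mpoly_of_dhomog__canonical__GRing_Linear.

Section Val.
Context (R : realType) (K : fieldType) (nu : K -> \bar R) (Hnu : is_nA_valuation nu).

Lemma nu0 : nu 0 = -oo%E.
Proof. by case: Hnu => h _ _ _; apply: (proj2 (h _)). Qed.

Lemma nu_pinf a : nu a != +oo%E.
Proof. by case: Hnu => _ h _ _. Qed.

Lemma nuM a b : nu (a * b) = (nu a + nu b)%E.
Proof. by case: Hnu => _ _ h _. Qed.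

Lemma nuD a b : (nu (a + b) <= Order.max (nu a) (nu b))%E.
Proof. by case: Hnu => _ _ _ h. Qed.

Lemma nu_ninf a : nu a = -oo%E -> a = 0.
Proof. by case: Hnu => h _ _ _; apply: (proj1 (h _)). Qed.

Lemma expT_ge0 (e : \bar R) : 0 <= expT e.
Proof. by case: e => [r| |] //=; rewrite ltW // expR_gt0. Qed.

Lemma expT_add (a b : \bar R) : a != +oo%E -> b != +oo%E ->
  expT (a + b)%E = expT a * expT b.
Proof.
case: a => [r| |] //; case: b => [s| |] //= _ _; rewrite ?mulr0 ?mul0r //.
by rewrite expRD.
Qed.

Lemma expT_le (a b : \bar R) : b != +oo%E -> (a <= b)%E -> expT a <= expT b.
Proof.
case: a => [r| |]; case: b => [s| |] //= _; rewrite ?lee_fin.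
- by rewrite ler_expR.
Qed.

Lemma logT_expT (a : \bar R) : a != +oo%E -> logT (expT a) = a.
Proof.
case: a => [r| |] //= _; rewrite /logT.
  by rewrite gt_eqF ?expR_gt0 // expRK.
by rewrite eqxx.
Qed.

Lemma expT_nuD a b : expT (nu (a + b)) <= expT (nu a) + expT (nu b).
Proof.
have h := nuD a b.
have [hab|hab] := leP (nu a) (nu b).
  rewrite max_r // in h.
  by apply: (le_trans (expT_le (nu_pinf b) h)); apply: ler_wpDl; rewrite ?expT_ge0.
move: h; rewrite max_l ?(ltW hab) // => h.
by apply: (le_trans (expT_le (nu_pinf a) h)); apply: ler_wpDr; rewrite ?expT_ge0.
Qed.

End Val.

Definition selA {K : fieldType} {N M : nat} (f : 'I_M -> 'I_N) : 'I_M -> 'I_N -> K :=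
  fun l k => (k == f l)%:R.

Section Lin.
Context (K : fieldType) (n : nat).

Lemma meval_linpoly N (A : 'I_N -> 'I_n -> K) b p j :
  mpoly.meval p (linpoly A b j) = linmap A b p j.
Proof.
rewrite /linpoly /linmap mpoly.mevalD mpoly.mevalC (big_morph _ (mpoly.mevalD p) (mpoly.meval0 p)) /=.
congr (_ + _); apply: eq_bigr => k _.
by rewrite mpoly.mevalM mpoly.mevalC /coordz mpoly.mevalXU.
Qed.


Lemma linmap_selb N M (f : 'I_M -> 'I_N) b y l :
  linmap (@selA K _ _ f) b y l = y (f l) + b l.
Proof.
rewrite /linmap /selA (bigD1 (f l)) //= eqxx mul1r big1 ?addr0 //.
by move=> k /negbTE ->; rewrite mul0r.
Qed.

Lemma linmap_sel N M (f : 'I_M -> 'I_N) y l :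
  linmap (@selA K _ _ f) (fun _ => 0) y l = y (f l).
Proof. by rewrite linmap_selb addr0. Qed.

Lemma id_embedding (X : set ('I_n -> K)) (b : 'I_n -> K) :
  lin_embedding X (@selA K _ _ id) b.
Proof.
move=> k; exists (mpoly.mpolyC n (- b k) + coordz K k) => p _.
rewrite mpoly.mevalD mpoly.mevalC /coordz mpoly.mevalXU.
have -> : linmap (selA id) b p k = p k + b k.
  rewrite /linmap /selA (bigD1 k) //= eqxx mul1r big1 ?addr0 //.
  by move=> i /negbTE ->; rewrite mul0r.
by rewrite addrC addrK.
Qed.

End Lin.

Lemma pi_classical (R : realType) (K : fieldType) (nu : K -> \bar R)
  (Hnu : is_nA_valuation nu) n N (A : 'I_N -> 'I_n -> K) b p j :
  pi_lin A b (classical_point nu p) j = nu (linmap A b p j).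
Proof.
by rewrite /pi_lin /classical_point meval_linpoly logT_expT // nu_pinf.
Qed.

Lemma part2 (R : realType) (K : fieldType) (nu : K -> \bar R)
  (Hnu : is_nA_valuation nu) (n : nat) (X : set ('I_n -> K)) :
  (forall p q : 'I_n -> K, X p -> X q ->
     (forall N (A : 'I_N -> 'I_n -> K) b, lin_embedding X A b ->
        pi_lin A b (classical_point nu p) = pi_lin A b (classical_point nu q)) ->
     classical_point nu p = classical_point nu q).
Proof.
move=> p q Xp Xq H.
suff -> : p = q by [].
apply/funext => k.
have := H n (selA id) (fun k => - p k) (id_embedding X _).
move=> /(congr1 (fun f => f k)).
rewrite !(pi_classical Hnu) !linmap_selb /= subrr (nu0 Hnu).
by move=> /esym /(nu_ninf Hnu) /eqP; rewrite subr_eq0 => /eqP.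
Qed.

Definition pcat (T : Type) N1 N2 (u1 : 'I_N1 -> T) (u2 : 'I_N2 -> T) :
  'I_(N1 + N2) -> T :=
  fun j => match fintype.split j with inl j1 => u1 j1 | inr j2 => u2 j2 end.

Lemma pcat_l (T : Type) N1 N2 (u1 : 'I_N1 -> T) (u2 : 'I_N2 -> T) j :
  pcat u1 u2 (lshift N2 j) = u1 j.
Proof. by rewrite /pcat (unsplitK (inl _ j)). Qed.

Lemma pcat_r (T : Type) N1 N2 (u1 : 'I_N1 -> T) (u2 : 'I_N2 -> T) j :
  pcat u1 u2 (rshift N1 j) = u2 j.
Proof. by rewrite /pcat (unsplitK (inr _ j)). Qed.

Section Prod.
Context (K : fieldType) (n : nat) (X : set ('I_n -> K)).
Context N1 N2 (A1 : 'I_N1 -> 'I_n -> K) (b1 : 'I_N1 -> K)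
  (A2 : 'I_N2 -> 'I_n -> K) (b2 : 'I_N2 -> K).

Lemma linmap_pcat_l p j :
  linmap (pcat A1 A2) (pcat b1 b2) p (lshift N2 j) = linmap A1 b1 p j.
Proof. by rewrite /linmap !pcat_l. Qed.

Lemma linmap_pcat_r p j :
  linmap (pcat A1 A2) (pcat b1 b2) p (rshift N1 j) = linmap A2 b2 p j.
Proof. by rewrite /linmap !pcat_r. Qed.

Lemma emb_pcat : lin_embedding X A1 b1 -> lin_embedding X (pcat A1 A2) (pcat b1 b2).
Proof.
move=> h k; have [g hg] := h k.
exists (mpoly.comp_mpoly (mktuple (fun i => coordz K (lshift N2 i))) g) => p Xp.
rewrite mpoly.comp_mpoly_meval -(hg p Xp); apply: mpoly.meval_eq => i.
by rewrite tnth_mktuple /coordz mpoly.mevalXU linmap_pcat_l.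
Qed.
End Prod.

Lemma torus_sel (K : fieldType) N M (f : 'I_M -> 'I_N) :
  torus_hom (@selA K _ _ f) (fun _ => 0).
Proof.
move=> y y' hy hy'; split; first by move=> l; rewrite linmap_sel.
by apply/funext => l; rewrite !linmap_sel.
Qed.

Unset Implicit Arguments.
Section Part1.
Context (R : realType) (K : fieldType) (nu : K -> \bar R)
  (Hnu : is_nA_valuation nu) (n : nat) (X : set ('I_n -> K))
  (t : trop_family R K n) (Ht : in_inverse_limit nu X t).

Definition emb := {N : nat & (('I_N -> 'I_n -> K) * ('I_N -> K))%type}.
Definition Demb : set emb := fun e => lin_embedding X (projT2 e).1 (projT2 e).2.
Definition Bset N (A : 'I_N -> 'I_n -> K) b : set ('I_n -> K) :=
  [set p | X p /\ nuvec nu (linmap A b p) = t N A b].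
Definition Bemb (e : emb) : set ('I_n -> K) :=
  Bset (projT1 e) (projT2 e).1 (projT2 e).2.

Lemma t_fin N A b : lin_embedding X A b -> forall j, t N A b j != +oo%E.
Proof. by move=> /(proj1 Ht N A b) [p Xp <-] j; exact: nu_pinf. Qed.

Lemma B_ne e : Demb e -> Bemb e !=set0.
Proof. by case: e => N [A b] /= /(proj1 Ht N A b) [p Xp hp]; exists p. Qed.

Lemma B_sub N M (A : 'I_N -> 'I_n -> K) b (A' : 'I_M -> 'I_n -> K) b'
    (f : 'I_M -> 'I_N) :
  lin_embedding X A b -> lin_embedding X A' b' ->
  (forall p l, X p -> linmap A b p (f l) = linmap A' b' p l) ->
  Bset N A b `<=` Bset M A' b'.
Proof.
move=> e1 e2 hf.
have [y [hy1 hy2]] := (proj2 Ht) N M A b A' b' (selA f) (fun _ => 0) e1 e2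
  (torus_sel f) (fun p Xp => funext (fun l => etrans (linmap_sel f _ l) (hf p l Xp))).
move=> p [Xp hp]; split => //; apply/funext => l.
rewrite -hy2 /nuvec linmap_sel -(hf p l Xp).
have h1 := congr1 (fun g => g (f l)) hp; have h2 := congr1 (fun g => g (f l)) hy1.
rewrite /nuvec /= in h1 h2; by rewrite h1 h2.
Qed.

Definition Fb := filter_from Demb Bemb.

Definition e0 : emb := existT _ n (selA id, fun _ => 0).

Lemma De0 : Demb e0.
Proof. exact: id_embedding. Qed.

Lemma Fb_proper : ProperFilter Fb.
Proof.
apply: filter_from_proper; last exact: B_ne.
apply: filter_from_filter; first by exists e0; exact: De0.
move=> [N1 [A1 b1]] [N2 [A2 b2]] /= d1 d2.
exists (existT _ (N1 + N2)%N (pcat A1 A2, pcat b1 b2)); first exact: emb_pcat.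
move=> p Bp; split.
  apply: (B_sub _ _ _ _ _ _ (lshift N2) _ d1 _ _ Bp); first exact: emb_pcat.
  by move=> q l _; rewrite linmap_pcat_l.
have d12 : lin_embedding X (pcat A1 A2) (pcat b1 b2) by exact: emb_pcat.
apply: (B_sub _ _ _ _ _ _ (@rshift N1 N2) d12 d2 _ _ Bp).
by move=> q l _; rewrite linmap_pcat_r.
Qed.

End Part1.

Lemma le_fine (R : realType) (e : \bar R) : e != +oo%E -> (e <= (fine e)%:E)%E.
Proof. by case: e => [r| |] //= _; rewrite leNye. Qed.

Section Bnd.
Context (R : realType) (K : fieldType) (nu : K -> \bar R)
  (Hnu : is_nA_valuation nu) (n : nat) (S : set ('I_n -> K))
  (hS : forall k, exists r : R, forall p, S p -> (nu (p k) <= r%:E)%E).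

Definition bnd (h : ('I_n -> K) -> K) :=
  exists r : R, forall p, S p -> (nu (h p) <= r%:E)%E.

Lemma bnd_ext h1 h2 : (forall p, h1 p = h2 p) -> bnd h2 -> bnd h1.
Proof. by move=> e [r hr]; exists r => p Sp; rewrite e; apply: hr. Qed.

Lemma bnd_cst c : bnd (fun _ => c).
Proof. by exists (fine (nu c)) => p _; apply: le_fine; exact: nu_pinf. Qed.

Lemma bnd_coord k : bnd (fun p => p k).
Proof. exact: hS. Qed.

Lemma bnd_add h1 h2 : bnd h1 -> bnd h2 -> bnd (fun p => h1 p + h2 p).
Proof.
move=> [r1 h1r] [r2 h2r]; exists (Order.max r1 r2) => p Sp.
have h := nuD Hnu (h1 p) (h2 p).
have [hab|hab] := leP (nu (h1 p)) (nu (h2 p)).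
  rewrite max_r // in h; apply: (le_trans h); apply: (le_trans (h2r p Sp)).
  by rewrite lee_fin le_max lexx orbT.
move: h; rewrite max_l ?(ltW hab) // => h.
apply: (le_trans h); apply: (le_trans (h1r p Sp)).
by rewrite lee_fin le_max lexx.
Qed.

Lemma bnd_mul h1 h2 : bnd h1 -> bnd h2 -> bnd (fun p => h1 p * h2 p).
Proof.
move=> [r1 h1r] [r2 h2r]; exists (r1 + r2) => p Sp.
by rewrite (nuM Hnu) EFinD; apply: leeD; [apply: h1r | apply: h2r].
Qed.

Lemma bnd_exp h m : bnd h -> bnd (fun p => h p ^+ m).
Proof.
move=> bh; elim: m => [|m IH].
  by apply: (bnd_ext _ (fun _ => 1)) => [p|]; [rewrite expr0 | apply: bnd_cst].
by apply: (bnd_ext _ (fun p => h p * h p ^+ m)) => [p|]; [rewrite exprS | apply: bnd_mul].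
Qed.

Lemma bnd_sum (I : Type) (s : seq I) (F : I -> ('I_n -> K) -> K) :
  (forall i, bnd (F i)) -> bnd (fun p => \sum_(i <- s) F i p).
Proof.
move=> hF; elim: s => [|a s IH].
  by apply: (bnd_ext _ (fun _ => 0)) => [p|]; [rewrite big_nil | apply: bnd_cst].
apply: (bnd_ext _ (fun p => F a p + \sum_(i <- s) F i p)) => [p|].
  by rewrite big_cons.
exact: bnd_add.
Qed.

Lemma bnd_prod (I : Type) (s : seq I) (F : I -> ('I_n -> K) -> K) :
  (forall i, bnd (F i)) -> bnd (fun p => \prod_(i <- s) F i p).
Proof.
move=> hF; elim: s => [|a s IH].
  by apply: (bnd_ext _ (fun _ => 1)) => [p|]; [rewrite big_nil | apply: bnd_cst].
apply: (bnd_ext _ (fun p => F a p * \prod_(i <- s) F i p)) => [p|].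
  by rewrite big_cons.
exact: bnd_mul.
Qed.

Lemma bnd_meval f : bnd (fun p => mpoly.meval p f).
Proof.
apply: (bnd_ext _ _ (fun p => mpoly.mevalE p f)).
apply: bnd_sum => m; apply: bnd_mul; first exact: bnd_cst.
apply: bnd_prod => i; apply: bnd_exp; exact: bnd_coord.
Qed.

End Bnd.

Set Implicit Arguments.
Section Lim.
Context (R : realType) (K : fieldType) (nu : K -> \bar R)
  (Hnu : is_nA_valuation nu) (n : nat)
  (U : set_system ('I_n -> K)) (UU : UltraFilter U).

Lemma ultra_fmap (T : Type) (g : ('I_n -> K) -> T) : UltraFilter (g @ U).
Proof.
split; first exact: fmap_proper_filter.
move=> G GF sub; apply/funext => A; apply/propext; split; last exact: sub.
move=> GA.
have [//|nA] := in_ultra_setVsetC (g @^-1` A) UU.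
have GnA : G (~` A) by apply: sub; exact: nA.
by have /filter_ex [x [] ] : G (A `&` ~` A) by apply: filterI.
Qed.

Definition hf (f : mpoly.mpoly n K) (p : 'I_n -> K) : R :=
  expT (nu (mpoly.meval p f)).

Lemma hf_cvg f r : U [set p | (nu (mpoly.meval p f) <= r%:E)%E] ->
  hf f @ U --> lim (hf f @ U).
Proof.
move=> Ur.
have cpt := @segment_compact R 0 (expR r).
rewrite compact_ultra /= in cpt.
have [|l [_ hl]] := cpt (hf f @ U) (ultra_fmap (hf f)).
  suff : U (hf f @^-1` `[0, expR r]) by [].
  apply: (filterS _ Ur) => p hp /=; rewrite /hf in_itv /=; apply/andP; split.
    exact: expT_ge0.
  exact: (expT_le _ hp).
by rewrite (cvg_lim (@Rhausdorff R) hl).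
Qed.

End Lim.

Lemma part1_main (R : realType) (K : closedFieldType) (nu : K -> \bar R)
  (Hnu : is_nA_valuation nu) (n : nat) (X : set ('I_n -> K))
  (t : trop_family R K n) (Ht : in_inverse_limit nu X t) :
  exists x : mpoly.mpoly n K -> R, berkovich_point nu X x /\
       forall N A b, lin_embedding X A b -> pi_lin A b x = t N A b.
Proof.
have [U [UU FU]] := ultraFilterLemma (Fb_proper _ _ _ _ _ _ Ht).
have UB : forall N A b, lin_embedding X A b -> U (Bset _ _ nu _ X t N A b).
  move=> N A b e; apply: FU.
  by exists (existT _ N (A, b)) => //.
set S0 := Bset _ _ nu _ X t n (selA id) (fun _ => 0).
have US0 : U S0 by apply: UB; exact: id_embedding.
have UX : U X by apply: (filterS _ US0) => p [].
have hS : forall k, exists r : R, forall p, S0 p -> (nu (p k) <= r%:E)%E.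
  move=> k; exists (fine (t n (selA id) (fun _ => 0) k)) => p [Xp hp].
  have := congr1 (fun g => g k) hp; rewrite /nuvec /= linmap_sel => ->.
  by apply: le_fine; apply: (t_fin _ _ _ Hnu _ _ _ Ht _ _ _); exact: id_embedding.
have Ubnd : forall f, exists r : R, U [set p | (nu (mpoly.meval p f) <= r%:E)%E].
  move=> f; have [r hr] := bnd_meval _ _ _ Hnu _ _ hS f.
  by exists r; apply: (filterS _ US0) => p /hr.
have cv : forall f, hf nu f @ U --> lim (hf nu f @ U).
  by move=> f; have [r hr] := Ubnd f; exact: (hf_cvg UU hr).
pose x f := lim (hf nu f @ U).
have xnear : forall f c, (forall p, X p -> hf nu f p = c) -> x f = c.
  move=> f c hc; apply: (lim_near_cst (@Rhausdorff R)).
  by apply: (filterS _ UX) => p /hc.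
exists x; split; last first.
  move=> N A b e; apply/funext => j; rewrite /pi_lin.
  have -> : x (linpoly A b j) = expT (t N A b j).
    apply: (lim_near_cst (@Rhausdorff R)).
    apply: (filterS _ (UB N A b e)) => p [Xp hp].
    by rewrite /hf meval_linpoly -hp.
  by rewrite logT_expT // (t_fin _ _ _ Hnu _ _ _ Ht _ _ _ e).
split.
- move=> a; apply: xnear => p _; by rewrite /hf mpoly.mevalC.
- move=> f; rewrite /x; apply: limr_ge.
    by apply/cvg_ex; eexists; exact: cv.
  by apply: filterE => p; exact: expT_ge0.
- move=> f g; rewrite /x.
  have -> : hf nu (f * g) = (hf nu f \* hf nu g)%R.
    apply/funext => p; rewrite /hf /= mpoly.mevalM (nuM Hnu).
    by rewrite expT_add // nu_pinf.
  exact: (cvg_lim (@Rhausdorff R) (cvgM (cv f) (cv g))).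
- move=> f g.
  have hcv : (hf nu (f + g) - (hf nu f + hf nu g))%R @ U --> x (f + g) - (x f + x g).
    by apply: cvgB; [apply: cv | apply: cvgD; apply: cv].
  have H : [set y : R | y <= 0] (x (f + g) - (x f + x g)).
    apply: (closed_cvg _ (@closed_le R 0) _ _ hcv).
    apply: filterE => p /=.
    rewrite subr_le0 /hf mpoly.mevalD; exact: expT_nuD.
  by move: H => /=; rewrite subr_le0.
- move=> f hf0; apply: xnear => p Xp.
  by rewrite /hf hf0 // (nu0 Hnu).
Qed.

Theorem theorem3p1 (R : realType) (K : closedFieldType) (nu : K -> \bar R)
  (n : nat) (X : set ('I_n -> K)) :
  is_nA_valuation nu -> nontrivial_valuation nu -> complete_valuation nu ->
  closed_algebraic X ->
  (* (i) pi is surjective onto the inverse limit *)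
  (forall t : trop_family R K n, in_inverse_limit nu X t ->
     exists x : mpoly.mpoly n K -> R, berkovich_point nu X x /\
       forall N A b, lin_embedding X A b -> pi_lin A b x = t N A b) /\
  (* (ii) pi restricted to X^cl is injective *)
  (forall p q : 'I_n -> K, X p -> X q ->
     (forall N (A : 'I_N -> 'I_n -> K) b, lin_embedding X A b ->
        pi_lin A b (classical_point nu p) = pi_lin A b (classical_point nu q)) ->
     classical_point nu p = classical_point nu q).
Proof.
move=> Hnu _ _ _; split.
  by move=> t Ht; exact: (part1_main Hnu Ht).
exact: (part2 Hnu).
Qed.
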